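(* Let $F$ be an infinite field, $n\ge2$, and $g\in\mathbb{Z}_n\setminus\{0\}$. Let $\mathcal{B}_g=\{[z,a_1y_1,\dots,a_my_m]\mid m\ge1,\ a_i>0\}$ where $z$ is a fixed variable of degree $g$. Then: (i) if $f,h\in\mathcal{B}_g$ and $V_f\le V_h$, then $h\in\langle\{f\}\cup I\rangle_{T_{\mathbb{Z}_n}}$; (ii) $(\mathcal{B}_g,\le_{\mathcal{B}_g})$ has the finite basis property; (iii) for every $T_{\mathbb{Z}_n}$-ideal $J\supseteq I$, with $\mathcal{A}_g=J\cap\mathcal{B}_g$, there is a finite subset $\mathcal{A}'_g\subseteq\mathcal{A}_g$ with $\langle\mathcal{A}_g\cup I\rangle_{T_{\mathbb{Z}_n}}=\langle\mathcal{A}'_g\cup I\rangle_{T_{\mathbb{Z}_n}}$.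
   Context: $UT_n(F)^{(-)}$: $n\times n$ upper triangular matrices with bracket $[a,b]=ab-ba$ and canonical $\mathbb{Z}_n$-grading (degree-$k$ component spanned by $e_{ij}$ with $j-i=k$). $\mathcal{L}_{\mathbb{Z}_n}$ is the free Lie algebra on variables $y_1,y_2,\dots$ of degree $0$ and $z^{g}_1,z^g_2,\dots$ of degree $g$ for each $g\ne0$; $I$ is the $T_{\mathbb{Z}_n}$-ideal of graded identities of $UT_n(F)^{(-)}$; $\langle S\rangle_{T_{\mathbb{Z}_n}}$ is the smallest graded ideal containing $S$ invariant under degree-preserving endomorphisms. Commutators are left normed; $[z,a_1y_1,\dots,a_my_m]$ has $y_i$ repeated $a_i$ times. $V_f=(a_1,\dots,a_m)$, and $(a_1,\dots,a_m)\le(a'_1,\dots,a'_r)$ iff there is a strictly increasing $\varphi:\{1,\dots,m\}\to\{1,\dots,r\}$ with $a_i\le a'_{\varphi(i)}$; $f\le_{\mathcal{B}_g}h$ iff $V_f\le V_h$. Finite basis property: every infinite sequence has an infinite non-decreasing subsequence. *)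

(* Defs.v *)
From mathcomp Require Import all_boot all_order all_algebra.
Set Implicit Arguments. Unset Strict Implicit. Unset Printing Implicit Defensive.
Import GRing.Theory.
Local Open Scope ring_scope.

(* Graded variables.  The grading group Z_n is represented by 'I_n (with    *)
(* the variables of degree 0 are the y_i, those of degree g <> 0 are the    *)
(* z^g_i.                                                                   *)
Definition gvar (n : nat) := ('I_n * nat)%type.
Definition gdeg {n : nat} (x : gvar n) : 'I_n := x.1.

Inductive lterm (F : Type) (n : nat) : Type :=
| TVar of gvar n
| TZero
| TAdd of lterm F n & lterm F n
| TScale of F & lterm F n
| TBr of lterm F n & lterm F n.
Arguments TZero {F n}.
Arguments TVar {F n}.
Arguments TAdd {F n}.
Arguments TScale {F n}.
Arguments TBr {F n}.

Section FreeLie.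
Variables (F : fieldType) (n : nat).
Notation term := (lterm F n).

(* The least congruence making terms a Lie algebra over F: terms modulo   *)
(* lie_eq form the free Lie algebra L_{Z_n} on the graded variables.       *)
Inductive lie_eq : term -> term -> Prop :=
| le_refl a : lie_eq a a
| le_sym a b : lie_eq a b -> lie_eq b a
| le_trans a b c : lie_eq a b -> lie_eq b c -> lie_eq a c
| le_add a a' b b' : lie_eq a a' -> lie_eq b b' -> lie_eq (TAdd a b) (TAdd a' b')
| le_scale c a a' : lie_eq a a' -> lie_eq (TScale c a) (TScale c a')
| le_br a a' b b' : lie_eq a a' -> lie_eq b b' -> lie_eq (TBr a b) (TBr a' b')
| le_addA a b c : lie_eq (TAdd (TAdd a b) c) (TAdd a (TAdd b c))
| le_addC a b : lie_eq (TAdd a b) (TAdd b a)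
| le_add0 a : lie_eq (TAdd a TZero) a
| le_addN a : lie_eq (TAdd a (TScale (-1) a)) TZero
| le_scale1 a : lie_eq (TScale 1 a) a
| le_scaleA c d a : lie_eq (TScale c (TScale d a)) (TScale (c * d) a)
| le_scaleDr c a b : lie_eq (TScale c (TAdd a b)) (TAdd (TScale c a) (TScale c b))
| le_scaleDl c d a : lie_eq (TScale (c + d) a) (TAdd (TScale c a) (TScale d a))
| le_brDl a b c : lie_eq (TBr (TAdd a b) c) (TAdd (TBr a c) (TBr b c))
| le_brDr a b c : lie_eq (TBr a (TAdd b c)) (TAdd (TBr a b) (TBr a c))
| le_brZl c a b : lie_eq (TBr (TScale c a) b) (TScale c (TBr a b))
| le_brZr c a b : lie_eq (TBr a (TScale c b)) (TScale c (TBr a b))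
| le_brxx a : lie_eq (TBr a a) TZero
| le_jacobi a b c :
    lie_eq (TAdd (TBr (TBr a b) c) (TAdd (TBr (TBr b c) a) (TBr (TBr c a) b))) TZero.

Inductive shom : 'I_n -> term -> Prop :=
| shom_var (x : gvar n) : shom (gdeg x) (TVar x)
| shom_zero k : shom k TZero
| shom_add k a b : shom k a -> shom k b -> shom k (TAdd a b)
| shom_scale k c a : shom k a -> shom k (TScale c a)
| shom_br (i j k : 'I_n) a b :
    shom i a -> shom j b -> ((i + j) %% n)%N = k :> nat -> shom k (TBr a b).

Definition homogeneous (k : 'I_n) (t : term) : Prop :=
  exists u, shom k u /\ lie_eq t u.

Definition tsum (s : seq term) : term := foldr (@TAdd F n) TZero s.

(* Substitution of variables = endomorphism of the free Lie algebra. *)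
Fixpoint tsubst (sigma : gvar n -> term) (t : term) : term :=
  match t with
  | TVar x => sigma x
  | TZero => TZero
  | TAdd a b => TAdd (tsubst sigma a) (tsubst sigma b)
  | TScale c a => TScale c (tsubst sigma a)
  | TBr a b => TBr (tsubst sigma a) (tsubst sigma b)
  end.

Definition graded_subst (sigma : gvar n -> term) : Prop :=
  forall x, homogeneous (gdeg x) (sigma x).

(* J (a set of elements of L, i.e. a lie_eq-closed predicate on terms) is *)
(* a T_{Z_n}-ideal: a graded ideal invariant under graded endomorphisms.   *)
Definition is_Tideal (J : term -> Prop) : Prop :=
  [/\ (forall a b, J a -> lie_eq a b -> J b),
      J TZero,
      (forall a b, J a -> J b -> J (TAdd a b)),
      (forall c a, J a -> J (TScale c a)) &
      (forall a b, J a -> J (TBr a b) /\ J (TBr b a))] /\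
  (
      (forall t, J t -> exists s : seq term,
          (forall i, (i < size s)%N ->
             J (nth TZero s i) /\ exists k, homogeneous k (nth TZero s i)) /\
          lie_eq t (tsum s)) /\
      (forall sigma t, graded_subst sigma -> J t -> J (tsubst sigma t))).

Definition Tgen (S : term -> Prop) (t : term) : Prop :=
  forall J, is_Tideal J -> (forall u, S u -> J u) -> J t.

Fixpoint eval (phi : gvar n -> 'M[F]_n) (t : term) : 'M[F]_n :=
  match t with
  | TVar x => phi x
  | TZero => 0
  | TAdd a b => eval phi a + eval phi b
  | TScale c a => c *: eval phi a
  | TBr a b => eval phi a *m eval phi b - eval phi b *m eval phi a
  end.

Definition graded_eval (phi : gvar n -> 'M[F]_n) : Prop :=
  forall x (i j : 'I_n), phi x i j != 0 -> (i <= j)%N && (j - i == gdeg x)%N.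

(* I : the graded identities of UT_n(F)^(-). *)
Definition graded_identity (t : term) : Prop :=
  forall phi, graded_eval phi -> eval phi t = 0.

(* The element [z, a_1 y_1, ..., a_m y_m] with z = z^g_1 and y_i = (0, i). *)
Definition yvar (g : 'I_n) (i : nat) : term := TVar (insubd g 0%N, i).

Definition bterm (g : 'I_n) (a : seq nat) : term :=
  foldl (fun t p => iter p.2 (fun u => TBr u (yvar g p.1)) t)
        (TVar (g, 1%N)) (zip (iota 1 (size a)) a).

End FreeLie.

Definition valid_exp (a : seq nat) : Prop :=
  (0 < size a)%N /\ all (fun x => 0 < x)%N a.

Definition vle (a b : seq nat) : Prop :=
  exists phi : nat -> nat,
    (forall i j, (i < j < size a)%N -> (phi i < phi j)%N) /\
    (forall i, (i < size a)%N ->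
       (phi i < size b)%N /\ (nth 0 a i <= nth 0 b (phi i))%N).

(* Main.v *)
Require Import Defs.
From mathcomp Require Import all_boot all_order all_algebra.
From Stdlib Require Import Classical ClassicalEpsilon.
Set Implicit Arguments. Unset Strict Implicit. Unset Printing Implicit Defensive.
Import GRing.Theory.

Lemma ex_min (P : nat -> Prop) : (exists k, P k) ->
  exists k, P k /\ forall j, P j -> (k <= j)%N.
Proof.
move=> [k Pk]; elim/ltn_ind: k Pk => k IH Pk.
case: (classic (exists j, P j /\ (j < k)%N)) => [[j [Pj ltj]]|H].
  exact: IH ltj Pj.
exists k; split=> // j Pj; rewrite leqNgt; apply/negP=> ltj; apply: H; by exists j.
Qed.

Definition wqo T (R : T -> T -> Prop) :=
  forall s : nat -> T, exists i j, (i < j)%N /\ R (s i) (s j).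

Lemma nat_wqo : wqo leq.
Proof.
move=> s; have [v [[k Hk] Hmin]] := ex_min (P := fun v => exists k, s k = v) (ex_intro _ (s 0) (ex_intro _ 0 erefl)).
exists k, k.+1; split=> //; rewrite Hk; apply: Hmin; by exists k.+1.
Qed.

Lemma wqo_chain T (R : T -> T -> Prop) : wqo R -> forall s : nat -> T,
  exists r : nat -> nat, (forall k, (r k < r k.+1)%N) /\ (forall k, R (s (r k)) (s (r k.+1))).
Proof.
move=> HR s.
case: (classic (exists N, forall i, (N <= i)%N -> exists j, (i < j)%N /\ R (s i) (s j))) => [[N HN]|H].
  pose nx i := epsilon (inhabits 0) (fun j => (i < j)%N /\ R (s i) (s j)).
  have Hnx i : (N <= i)%N -> (i < nx i)%N /\ R (s i) (s (nx i)).
    by move=> Ni; exact: (epsilon_spec (inhabits 0) (fun j => (i < j)%N /\ R (s i) (s j)) (HN i Ni)).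
  pose r := fix r k := if k is k'.+1 then nx (r k') else N.
  have rN k : (N <= r k)%N.
    elim: k => [|k IH] //=; have [+ _] := Hnx _ IH; exact: leq_trans (ltnW _).
  exists r; split=> k /=; by have [] := Hnx _ (rN k).
have HT N : exists i, (N <= i)%N /\ forall j, (i < j)%N -> ~ R (s i) (s j).
  have := not_ex_all_not _ _ H N => /not_all_ex_not [i Hi].
  have [Ni Hj] := imply_to_and _ _ Hi.
  exists i; split=> // j ij Rij; apply: Hj; by exists j.
pose te N := epsilon (inhabits 0) (fun i => (N <= i)%N /\ forall j, (i < j)%N -> ~ R (s i) (s j)).
have Hte N : (N <= te N)%N /\ forall j, (te N < j)%N -> ~ R (s (te N)) (s j).
  exact: (epsilon_spec (inhabits 0) (fun i => (N <= i)%N /\ forall j, (i < j)%N -> ~ R (s i) (s j)) (HT N)).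
pose u := fix u k := if k is k'.+1 then te (u k').+1 else te 0.
have uS k : (u k < u k.+1)%N by have [] := Hte (u k).+1.
have umono i j : (i < j)%N -> (u i < u j)%N.
  elim: j => [|j IH] // ; rewrite ltnS leq_eqVlt => /orP [/eqP ->|/IH h] //.
  exact: ltn_trans h (uS j).
have [i [j [ij Rij]]] := HR (fun k => s (u k)).
have Hi : forall j, (u i < j)%N -> ~ R (s (u i)) (s j).
  by case: i {ij Rij} => [|i] /=; [have [] := Hte 0 | have [] := Hte (u i).+1].
exact: False_ind (Hi _ (umono _ _ ij) Rij).
Qed.

Lemma vle_nil b : vle [::] b.
Proof. by exists id; split => [i j /andP []|]. Qed.

Lemma vle_consr a b x : vle a b -> vle a (x :: b).
Proof.
move=> [phi [Hi Hb]]; exists (fun i => (phi i).+1); split.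
  by move=> i j ij; rewrite ltnS; apply: Hi.
by move=> i ia; have [h1 h2] := Hb i ia; split.
Qed.

Lemma vle_cons a b x y : (x <= y)%N -> vle a b -> vle (x :: a) (y :: b).
Proof.
move=> xy [phi [Hi Hb]].
exists (fun i => if i is i'.+1 then (phi i').+1 else 0); split.
  move=> [|i] [|j] //=; rewrite !ltnS => /andP [ij ja]; apply: Hi; by rewrite ij.
move=> [|i] ia /=; first by split.
by have [h1 h2] := Hb i ia; split.
Qed.

Definition bad (t : nat -> seq nat) := forall i j, (i < j)%N -> ~ vle (t i) (t j).
Definition ext (t : nat -> seq nat) (p : seq (seq nat)) :=
  forall i, (i < size p)%N -> t i = nth [::] p i.

Lemma higman : wqo vle.
Proof.
move=> s0; apply: NNPP => Hn.
have bs0 : bad s0.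
  move=> i j ij Hv; apply: Hn; by exists i, j.
pose Q p x := (exists t, bad t /\ ext t p /\ t (size p) = x) /\
   forall t, bad t -> ext t p -> (size x <= size (t (size p)))%N.
have Qex p : (exists t, bad t /\ ext t p) -> exists x, Q p x.
  move=> Hp.
  have [k [[t [bt [et tk]]] Hk]] := ex_min (P := fun k => exists t, bad t /\ ext t p /\ size (t (size p)) = k)
    (let: ex_intro t (conj bt et) := Hp in ex_intro _ _ (ex_intro _ t (conj bt (conj et erefl)))).
  exists (t (size p)); split; first by exists t.
  move=> t' bt' et'; rewrite tk; apply: Hk; by exists t'.
pose nx p := epsilon (inhabits [::]) (Q p).
pose pre := fix pre k := if k is k'.+1 then rcons (pre k') (nx (pre k')) else [::].
have spre k : size (pre k) = k by elim: k => //= k IH; rewrite size_rcons IH.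
have inv k : exists t, bad t /\ ext t (pre k).
  elim: k => [|k [t [bt et]]]; first by exists s0; split.
  have [[t' [bt' [et' t'k]]] _] := epsilon_spec (inhabits [::]) (Q (pre k)) (Qex _ (ex_intro _ t (conj bt et))).
  exists t'; split=> // i; rewrite /= size_rcons nth_rcons spre ltnS leq_eqVlt => /orP [/eqP ->|ik].
    by rewrite ltnn eqxx -{1}(spre k) t'k.
  by rewrite ik et' ?spre.
pose m k := nx (pre k).
have Hm k : Q (pre k) (m k).
  have [t [bt et]] := inv k; exact: epsilon_spec (inhabits [::]) (Q (pre k)) (Qex _ (ex_intro _ t (conj bt et))).
have prem j i : (i < j)%N -> nth [::] (pre j) i = m i.
  elim: j => [|j IH] // ; rewrite /= nth_rcons spre ltnS leq_eqVlt => /orP [/eqP ->|ij].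
    by rewrite ltnn eqxx.
  by rewrite ij IH.
have extm t k : ext t (pre k) -> forall i, (i < k)%N -> t i = m i.
  by move=> et i ik; rewrite et ?spre // prem.
have bm : bad m.
  move=> i j ij; have [t [bt et]] := inv j.+1.
  rewrite -(extm _ _ et i) ?(ltn_trans ij) // -(extm _ _ et j) //; exact: bt.
have mmin k t : bad t -> ext t (pre k) -> (size (m k) <= size (t k))%N.
  by move=> bt et; have [_ H] := Hm k; have := H t bt et; rewrite spre.
have mne k : m k <> [::].
  move=> e; apply: (bm k k.+1 (ltnSn _)); rewrite e; exact: vle_nil.
pose h k := head 0 (m k); pose tl k := behead (m k).
have mE k : m k = h k :: tl k by rewrite /h /tl; case: (m k) (mne k).
have [r [rS rR]] := wqo_chain nat_wqo h.
have rmono i j : (i < j)%N -> (r i < r j)%N /\ (h (r i) <= h (r j))%N.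
  elim: j => [|j IH] //; rewrite ltnS leq_eqVlt => /orP [/eqP ->|/IH [h1 h2]].
    by split; [exact: rS| exact: rR].
  split; [exact: ltn_trans h1 (rS j) | exact: leq_trans h2 (rR j)].
have rge k : (r 0 <= r k)%N by case: k => // k; have [/ltnW] := rmono 0 k.+1 isT.
pose t k := if (k < r 0)%N then m k else tl (r (k - r 0)).
have et : ext t (pre (r 0)).
  by move=> i; rewrite spre => ir; rewrite /t ir prem.
have bt : bad t.
  move=> i j ij; rewrite /t.
  case: (ltnP i (r 0)) => ir; case: (ltnP j (r 0)) => jr.
  - exact: bm.
  - move=> Hv; apply: (bm i (r (j - r 0))); first exact: leq_trans ir (rge _).
    rewrite (mE (r (j - r 0))); exact: vle_consr.
  - by move: (leq_ltn_trans ir (ltn_trans ij jr)); rewrite ltnn.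
  - have ij' : (i - r 0 < j - r 0)%N by rewrite ltn_sub2r // (leq_ltn_trans ir ij).
    have [h1 h2] := rmono _ _ ij'.
    move=> Hv; apply: (bm _ _ h1); rewrite (mE (r (i - r 0))) (mE (r (j - r 0))).
    exact: vle_cons.
have := mmin (r 0) t bt et; rewrite /t ltnn subnn (mE (r 0)) /=.
by rewrite ltnn.
Qed.

Lemma foldl_rem (T : eqType) A (f : A -> T -> A) :
  (forall t a b, f (f t a) b = f (f t b) a) ->
  forall s x t, x \in s -> foldl f t s = foldl f t (x :: rem x s).
Proof.
move=> Hf; elim=> [|y s IH] x t //=; rewrite in_cons.
case: (eqVneq x y) => [->|xy] /= Hx; first by rewrite ?eqxx.
by rewrite (IH x) //= Hf.
Qed.

Lemma foldl_perm (T : eqType) A (f : A -> T -> A) :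
  (forall t a b, f (f t a) b = f (f t b) a) ->
  forall s1 s2 t, perm_eq s1 s2 -> foldl f t s1 = foldl f t s2.
Proof.
move=> Hf; elim=> [|x s IH] s2 t Hp.
  by move: Hp; rewrite perm_sym => /perm_nilP ->.
have xs2 : x \in s2 by rewrite -(perm_mem Hp) mem_head.
rewrite (foldl_rem Hf t xs2) /=; apply: IH.
by rewrite -(perm_cons x) (perm_trans Hp) // perm_to_rem.
Qed.

Section Alg.
Variables (F : fieldType) (n : nat) (g : 'I_n).
Local Notation term := (lterm F n).

Definition Lt (t : term) (w : seq nat) := foldl (fun u i => TBr u (yvar F g i)) t w.

Fixpoint W (a : seq nat) (psi : nat -> nat) : seq nat :=
  if a is x :: a' then nseq x (psi 0) ++ W a' (fun i => psi i.+1) else [::].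

Lemma W_ext a psi psi' : (forall i, (i < size a)%N -> psi i = psi' i) -> W a psi = W a psi'.
Proof.
elim: a psi psi' => [|x a IH] psi psi' H //=.
by rewrite (H 0) // (IH _ (fun i => psi' i.+1)) // => i ia; apply: H.
Qed.

Lemma map_W f a psi : map f (W a psi) = W a (fun i => f (psi i)).
Proof. by elim: a psi => [|x a IH] psi //=; rewrite map_cat map_nseq IH. Qed.

Lemma Lt_nseq t k x w : Lt t (nseq k x ++ w) = Lt (iter k (fun u => TBr u (yvar F g x)) t) w.
Proof.
rewrite /Lt foldl_cat; congr foldl.
by elim: k t => [|k IH] t //=; rewrite IH -iterSr.
Qed.

Lemma bterm_gen a o t :
  foldl (fun t p => iter p.2 (fun u => TBr u (yvar F g p.1)) t) t (zip (iota o (size a)) a)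
  = Lt t (W a (fun i => o + i)).
Proof.
elim: a o t => [|x a IH] o t //=.
rewrite Lt_nseq IH addn0; congr Lt; apply: W_ext => i _; by rewrite addnS addSn.
Qed.

Lemma bterm_W a : bterm F g a = Lt (TVar (g, 1%N)) (W a (fun i => 1 + i)).
Proof. exact: bterm_gen. Qed.

Local Open Scope ring_scope.
Lemma eval_Lt phi t w : eval phi (Lt t w) =
  foldl (fun M i => M *m phi (insubd g 0%N, i) - phi (insubd g 0%N, i) *m M) (eval phi t) w.
Proof. by elim: w t => [|x w IH] t //=; rewrite IH. Qed.

Lemma y0 : nat_of_ord (insubd g 0%N) = 0%N.
Proof. by rewrite val_insubd (leq_ltn_trans (leq0n _) (ltn_ord g)). Qed.

Lemma diag_comm (A B : 'M[F]_n) : (forall i j, A i j != 0 -> i = j) ->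
  (forall i j, B i j != 0 -> i = j) -> A *m B = B *m A.
Proof.
move=> HA HB.
have HA' i j : i != j -> A i j = 0.
  by move=> ij; case: (eqVneq (A i j) 0) => // /HA e; rewrite e eqxx in ij.
have HB' i j : i != j -> B i j = 0.
  by move=> ij; case: (eqVneq (B i j) 0) => // /HB e; rewrite e eqxx in ij.
apply/matrixP => i j; rewrite !mxE (bigD1 i) //= big1 ?addr0; last first.
  by move=> k ki; rewrite (HA' i k) ?mul0r // eq_sym.
rewrite (bigD1 i) //= big1 ?addr0; last first.
  by move=> k ki; rewrite (HB' i k) ?mul0r // eq_sym.
case: (eqVneq i j) => [->|ij]; first by rewrite mulrC.
by rewrite (HA' i j) // (HB' i j) // !mulr0.
Qed.

Lemma ydiag (phi : gvar n -> 'M[F]_n) i : graded_eval phi -> forall a b, phi (insubd g 0%N, i) a b != 0 -> a = b.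
Proof.
move=> Hphi a b /Hphi /andP [ab]; rewrite /gdeg /= y0 subn_eq0 => ba.
by apply: val_inj; apply/eqP; rewrite eqn_leq ab ba.
Qed.

Lemma adcomm (M Ya Yb : 'M[F]_n) : Ya *m Yb = Yb *m Ya ->
  (M *m Ya - Ya *m M) *m Yb - Yb *m (M *m Ya - Ya *m M) =
  (M *m Yb - Yb *m M) *m Ya - Ya *m (M *m Yb - Yb *m M).
Proof.
move=> C.
rewrite !mulmxBl !mulmxBr !mulmxA -!(mulmxA M) C.
rewrite !opprB !addrA.
set P := M *m _; set X := Ya *m M *m Yb; set Y := Yb *m M *m Ya; set Q := _ *m M.
rewrite -!addrA; congr (_ + _); rewrite addrCA [RHS]addrCA; congr (_ + _).
exact: addrC.
Qed.
End Alg.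

Lemma nseq_subseq (T : eqType) (x y : nat) (c : T) : (x <= y)%N -> subseq (nseq x c) (nseq y c).
Proof.
move=> xy; rewrite -(subnKC xy) nseqD -{1}(cats0 (nseq x c)).
apply: cat_subseq => //; exact: sub0seq.
Qed.

Lemma W_subseq b : forall a phi chi,
  (forall i j, (i < j < size a)%N -> (phi i < phi j)%N) ->
  (forall i, (i < size a)%N -> (phi i < size b)%N /\ (nth 0 a i <= nth 0 b (phi i))%N) ->
  subseq (W a (fun i => chi (phi i))) (W b chi).
Proof.
elim: b => [|y b IH] [|x a] phi chi Hinc Hb //=; try exact: sub0seq.
  by have [] := Hb 0%N isT.
have [H0 Hx] := Hb 0%N isT.
have pos i : (0 < i < (size a).+1)%N -> (phi 0 < phi i)%N.
  by move=> Hi; apply: Hinc.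
case E: (phi 0%N) H0 Hx pos => [|k] H0 Hx pos /=.
- apply: cat_subseq; first exact: nseq_subseq.
  have pp i : (i < size a)%N -> (0 < phi i.+1)%N by move=> ia; apply: pos.
  rewrite (W_ext (psi' := fun i => (fun i => chi i.+1) ((fun i => (phi i.+1).-1) i))); last first.
    by move=> i /pp; case: (phi i.+1).
  apply: IH.
    move=> i j /andP [ij ja]; have := Hinc i.+1 j.+1; rewrite !ltnS ij ja => /(_ isT).
    have := pp i (ltn_trans ij ja); have := pp j ja.
    by case: (phi i.+1) => // p; case: (phi j.+1).
  move=> i ia; have [h1 h2] := Hb i.+1 ia; have := pp i ia.
  by move: h1 h2; case: (phi i.+1).
- have pp i : (i < (size a).+1)%N -> (0 < phi i)%N.
    case: i => [|i] Hi; first by rewrite E.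
    by rewrite (leq_trans _ (pos i.+1 Hi)).
  have H : subseq (W (x :: a) (fun i => chi (phi i))) (W b (fun i => chi i.+1)).
    rewrite (W_ext (psi' := fun i => (fun i => chi i.+1) ((fun i => (phi i).-1) i))); last first.
      by move=> i /pp; case: (phi i).
    apply: IH.
      move=> i j /andP [ij ja]; have := Hinc i j; rewrite ij ja => /(_ isT).
      have := pp i (ltn_trans ij ja); have := pp j ja.
      by case: (phi i) => // p; case: (phi j).
    move=> i ia; have [h1 h2] := Hb i ia; have := pp i ia.
    by move: h1 h2; case: (phi i).
  move: H; rewrite /= E => H.
  rewrite -[X in subseq X _]cat0s; exact: cat_subseq (sub0seq _) H.
Qed.

Lemma subseq_perm (T : eqType) (w u : seq T) : subseq u w -> exists v, perm_eq w (u ++ v).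
Proof.
elim: w u => [|x w IH] u.
  by move=> /eqP ->; exists [::].
case: u => [|y u] /=.
  by move=> _; exists (x :: w).
case: (eqVneq y x) => [->|yx] H.
  by have [v Hv] := IH _ H; exists v; rewrite /= perm_cons.
have [v Hv] := IH _ H; exists (x :: v).
have e : y :: u ++ x :: v = (y :: u) ++ [:: x] ++ v by [].
by rewrite e perm_sym perm_catCA /= perm_cons perm_sym.
Qed.

Section Ideal.
Variables (F : fieldType) (n : nat) (g : 'I_n).
Local Notation term := (lterm F n).
Variable J : term -> Prop.
Hypothesis HJ : is_Tideal J.
Hypothesis HI : forall u, graded_identity u -> J u.

Lemma J_lie a b : J a -> lie_eq a b -> J b.
Proof. by case: HJ => -[H _ _ _ _] _; apply: H. Qed.

Lemma J_gi a b : J a -> graded_identity (TAdd b (TScale (-1)%R a)) -> J b.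
Proof.
move=> Ja Hgi; have [[_ _ Jadd _ _] _] := HJ.
apply: (J_lie (Jadd _ _ (HI Hgi) Ja)).
apply: le_trans (le_addA _ _ _) _.
apply: le_trans (le_add (le_refl _) (le_addC _ _)) _.
apply: le_trans (le_add (le_refl _) (le_addN _)) _.
exact: le_add0.
Qed.

Local Open Scope ring_scope.

Lemma J_perm t w w' : perm_eq w w' -> J (Lt g t w) -> J (Lt g t w').
Proof.
move=> Hp Jw; apply: (J_gi Jw) => phi Hphi /=.
rewrite !eval_Lt (foldl_perm _ _ Hp) ?scaleN1r ?subrr //.
move=> M a b; apply: adcomm; apply: diag_comm; exact: ydiag.
Qed.

Lemma J_app t w v : J (Lt g t w) -> J (Lt g t (w ++ v)).
Proof.
have [[_ _ _ _ Jbr] _] := HJ.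
elim: v w => [|x v IH] w; first by rewrite cats0.
move=> Jw; rewrite -cat_rcons; apply: IH.
by rewrite /Lt foldl_rcons; have [] := Jbr _ (yvar F g x) Jw.
Qed.

Lemma J_map (f : nat -> nat) w : nat_of_ord g != 0%N ->
  J (Lt g (TVar (g, 1%N)) w) -> J (Lt g (TVar (g, 1%N)) (map f w)).
Proof.
move=> gnz Jw; have [_ [_ Jsub]] := HJ.
pose sigma (x : gvar n) : term := if nat_of_ord x.1 == 0%N then TVar (x.1, f x.2) else TVar x.
have Hs : graded_subst sigma.
  move=> x; exists (sigma x); split; last exact: le_refl.
  rewrite /sigma; case: ifP => _; [exact: (shom_var F (x.1, f x.2)) | exact: shom_var].
have := Jsub sigma _ Hs Jw.
have -> : forall t w, tsubst sigma (Lt g t w) = Lt g (tsubst sigma t) (map f w).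
  move=> t0 w0; elim: w0 t0 => [|x w0 IH] t0 //=.
  by rewrite IH /= /sigma /yvar /= y0 eqxx.
by rewrite /= /sigma /= (negbTE gnz).
Qed.

Lemma part_i a b : nat_of_ord g != 0%N -> vle a b -> J (bterm F g a) -> J (bterm F g b).
Proof.
move=> gnz [phi [Hinc Hb]] Ja.
have Hsub := W_subseq (fun i => 1 + i)%N Hinc Hb.
have [v Hv] := subseq_perm Hsub.
rewrite bterm_W; move: Hv; rewrite perm_sym => Hv; apply: (J_perm Hv); apply: J_app.
rewrite (_ : W a _ = map (fun k => (phi k.-1).+1) (W a (fun i => 1 + i)%N)); last first.
  by rewrite map_W; apply: W_ext.
apply: J_map => //; by move: Ja; rewrite bterm_W.
Qed.
End Ideal.

Lemma cover (P : seq nat -> Prop) : exists A' : seq (seq nat),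
  (forall a, a \in A' -> P a) /\ (forall a, P a -> exists2 a', a' \in A' & vle a' a).
Proof.
apply: NNPP => Hn.
have step (A' : seq (seq nat)) : (forall a, a \in A' -> P a) ->
    exists x, P x /\ forall a', a' \in A' -> ~ vle a' x.
  move=> HA; apply: NNPP => Hx; apply: Hn; exists A'; split => // a Pa.
  apply: NNPP => Hc; apply: Hx; exists a; split => // a' a'in Hv; apply: Hc; by exists a'.
pose Q (A' : seq (seq nat)) x := P x /\ forall a', a' \in A' -> ~ vle a' x.
pose nx A' := epsilon (inhabits [::]) (Q A').
pose pre := fix pre k := if k is k'.+1 then rcons (pre k') (nx (pre k')) else [::].
have inv k : forall a, a \in pre k -> P a.
  elim: k => [|k IH] a //=; rewrite mem_rcons in_cons => /orP [/eqP ->|/IH //].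
  by have [] := epsilon_spec (inhabits [::]) (Q (pre k)) (step _ IH).
pose s k := nx (pre k).
have Hs k : Q (pre k) (s k) := epsilon_spec (inhabits [::]) (Q (pre k)) (step _ (inv k)).
have sin i j : (i < j)%N -> s i \in pre j.
  elim: j => [|j IH] //; rewrite ltnS leq_eqVlt /= mem_rcons in_cons => /orP [/eqP ->|/IH ->].
    by rewrite eqxx.
  by rewrite orbT.
have [i [j [ij Hv]]] := higman s.
have [_ H] := Hs j; exact: H _ (sin _ _ ij) Hv.
Qed.

Theorem mainTheorem11 (F : fieldType) (n : nat) (g : 'I_n) :
  (forall s : seq F, exists x : F, x \notin s) ->
  (2 <= n)%N ->
  nat_of_ord g != 0%N ->
  [/\
   (* (i) *)
   (forall a b : seq nat, valid_exp a -> valid_exp b -> vle a b ->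
      Tgen (fun u => u = bterm F g a \/ graded_identity u) (bterm F g b)),
   (* (ii) finite basis property of (B_g, <=_{B_g}) *)
   (forall s : nat -> seq nat, (forall k, valid_exp (s k)) ->
      exists r : nat -> nat,
        (forall k, (r k < r k.+1)%N) /\ (forall k, vle (s (r k)) (s (r k.+1)))) &
   (* (iii) *)
   (forall J : lterm F n -> Prop, is_Tideal J ->
      (forall u, graded_identity u -> J u) ->
      exists A' : seq (seq nat),
        (forall a, a \in A' -> valid_exp a /\ J (bterm F g a)) /\
        (forall t,
           Tgen (fun u => (exists a, [/\ valid_exp a, J (bterm F g a) & u = bterm F g a])
                          \/ graded_identity u) t
           <->
           Tgen (fun u => (exists a, a \in A' /\ u = bterm F g a)
                          \/ graded_identity u) t))].
Proof.
move=> _ _ gnz; split.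
- move=> a b _ _ hab J HJ HS.
  apply: (part_i HJ (fun u gi => HS u (or_intror gi)) gnz hab).
  exact: HS _ (or_introl erefl).
- move=> s _; exact: wqo_chain higman s.
- move=> J HJ HI.
  have [A' [HA Hc]] := cover (fun a => valid_exp a /\ J (bterm F g a)).
  exists A'; split => // t; split => Ht J' HJ' HS'.
  + apply: Ht => // u [[a [va Ja ->]]|gi]; last by apply: HS'; right.
    have [a' a'in hv] := Hc a (conj va Ja).
    apply: (part_i HJ' (fun u gi => HS' u (or_intror gi)) gnz hv).
    apply: HS'; left; by exists a'.
  + apply: Ht => // u [[a [ain ->]]|gi]; apply: HS'; last by right.
    left; have [va Ja] := HA a ain; by exists a.
Qed.
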